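(* Let $X$ be a finite set with $N=|X|$ and $n=\binom N2$. Let $t,t'$ be two equidistant trees on taxa $X$ with the same coarse type $\{X_i\}_{i\in I}$, and let $\Omega>\omega>0$ be such that $\max\{\eta(t),\eta(t')\}\le\Omega$ and $\min\{\nu(t),\nu(t')\}\ge\omega$. Then \[ d_\Delta(t,t')\le (n+\iota)\,2(\Omega-\omega),\qquad \text{where } \iota=\sum_{i\in I}\binom{|X_i|}{2}. \] If moreover $t$ and $t'$ are both binary trees, then $d_\Delta(t,t')\le (2n-N+1)\,2(\Omega-\omega)$.
   Context: An equidistant tree $t$ on taxa $X$ is identified with the vector $(t_{ab})\in\mathbb{R}^n$ (coordinates indexed by unordered pairs of distinct taxa) of leaf-to-leaf path lengths; such vectors are exactly those for which, for all distinct $a,b,c$, $\max\{t_{ab},t_{ac},t_{bc}\}$ is attained at least twice. Trees are considered up to adding a multiple of $\mathbb{1}$ (changing all pendant edge lengths equally). The depth of a node is its distance from the root. Let $M=\max_{a\ne b}t_{ab}$; the depth of the lowest common ancestor of leaves $a\ne b$ equals $(M-t_{ab})/2$. Define $\eta(t)$ = maximal depth of an internal node $=\frac12(M-\min_{a\neq b}t_{ab})$ and $\nu(t)$ = minimal depth of an internal node other than the root $=\frac12\min\{M-t_{ab}: t_{ab}<M\}$ ($+\infty$ if there is none); both are invariant under adding multiples of $\mathbb{1}$. The coarse type of $t$ is the partition of $X$ into the leaf sets of the subtrees at the children of the root, i.e. distinct $a,b$ are in the same block iff $t_{ab}<M$. The tree is binary if every internal node has exactly two children, i.e. for all distinct $a,b,c$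 the numbers $t_{ab},t_{ac},t_{bc}$ are not all equal. $d_{\Delta}(x,y)=\sum_{i=1}^n (y_i-x_i) + n\max_{i}(x_i-y_i)$. *)

(* Defs.v *)
From mathcomp Require Import all_boot all_order all_algebra.
Set Implicit Arguments. Unset Strict Implicit. Unset Printing Implicit Defensive.
Import Order.TTheory GRing.Theory Num.Theory.
Local Open Scope ring_scope.

(* Taxa: a finite type T (X = the whole of T, N = #|T|).
   Coordinates are indexed by unordered pairs {a,b} of distinct taxa,
   represented as 2-element sets; a vector in R^n is a function
   x : {set T} -> R of which only the values on [pairs T] matter. *)

Section Defs.
Variables (R : realFieldType) (T : finType).

Definition pairs : {set {set T}} := [set A : {set T} | #|A| == 2%N].

Definition npairs : nat := 'C(#|T|, 2).

Definition pr (a b : T) : {set T} := [set a; b].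

(* a default coordinate, used only as neutral seed of max/min over the
   (nonempty when N >= 2) set of pairs *)
Definition p0 : {set T} := nth set0 (enum pairs) 0.

Definition vmax (x : {set T} -> R) : R :=
  \big[Num.max/x p0]_(p in pairs) x p.
Definition vmin (x : {set T} -> R) : R :=
  \big[Num.min/x p0]_(p in pairs) x p.

Definition equidistant (t : {set T} -> R) : Prop :=
  forall a b c : T, a != b -> a != c -> b != c ->
    let m := Num.max (t (pr a b)) (Num.max (t (pr a c)) (t (pr b c))) in
    (2 <= (t (pr a b) == m) + (t (pr a c) == m) + (t (pr b c) == m))%N.

Definition Mt (t : {set T} -> R) : R := vmax t.

Definition eta (t : {set T} -> R) : R := (Mt t - vmin t) / 2.

(* nu(t) = (1/2) min { M - t_ab : t_ab < M }, None standing for +infinity *)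
Definition nu (t : {set T} -> R) : option R :=
  match [pick p in pairs | t p < Mt t] with
  | None => None
  | Some q => Some ((\big[Num.min/Mt t - t q]_(p in pairs | t p < Mt t)
                        (Mt t - t p)) / 2)
  end.

Definition ge_opt (w : R) (v : option R) : Prop :=
  match v with None => True | Some v => w <= v end.

Definition coarse_type (t : {set T} -> R) : {set {set T}} :=
  [set [set b | (b == a) || (t (pr a b) < Mt t)] | a : T].

Definition binary (t : {set T} -> R) : Prop :=
  forall a b c : T, a != b -> a != c -> b != c ->
    ~~ ((t (pr a b) == t (pr a c)) && (t (pr a c) == t (pr b c))).

Definition dDelta (x y : {set T} -> R) : R :=
  \sum_(p in pairs) (y p - x p) + npairs%:R * vmax (fun p => x p - y p).

End Defs.

(* Main.v *)
Require Import Defs.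
From mathcomp Require Import all_boot all_order all_algebra.
Import Order.TTheory GRing.Theory Num.Theory.
Local Open Scope ring_scope.
From mathcomp Require Import lra.
Set Implicit Arguments. Unset Strict Implicit.

Lemma le_bigmax_seq' (R : realFieldType) (I : eqType) (r : seq I) (P : pred I)
  (F : I -> R) x0 q : q \in r -> P q -> F q <= \big[Num.max/x0]_(i <- r | P i) F i.
Proof.
elim: r => // a r IH; rewrite big_cons inE => /orP[/eqP-> | qr] Pq.
  by rewrite Pq le_max lexx.
case: (P a); last exact: IH.
by rewrite le_max IH ?orbT.
Qed.

Lemma ge_bigmin_seq' (R : realFieldType) (I : eqType) (r : seq I) (P : pred I)
  (F : I -> R) x0 q : q \in r -> P q -> \big[Num.min/x0]_(i <- r | P i) F i <= F q.
Proof.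
elim: r => // a r IH; rewrite big_cons inE => /orP[/eqP-> | qr] Pq.
  by rewrite Pq ge_min lexx.
case: (P a); last exact: IH.
by rewrite ge_min IH ?orbT.
Qed.

Lemma pr_sym (T : finType) (a b : T) : pr a b = pr b a.
Proof. by rewrite /pr setUC. Qed.

Lemma pr_pairs (T : finType) (a b : T) : a != b -> pr a b \in pairs T.
Proof. by move=> ab; rewrite inE /pr cards2 ab. Qed.

Lemma pairsP (T : finType) p : p \in pairs T -> exists a b, a != b /\ p = pr a b.
Proof. by rewrite inE => /cards2P. Qed.

Lemma vmax_ge (R : realFieldType) (T : finType) (x : {set T} -> R) q :
  q \in pairs T -> x q <= vmax x.
Proof. by move=> qp; apply: le_bigmax_seq' => //; rewrite mem_index_enum. Qed.

Lemma vmin_le (R : realFieldType) (T : finType) (x : {set T} -> R) q :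
  q \in pairs T -> vmin x <= x q.
Proof. by move=> qp; apply: ge_bigmin_seq' => //; rewrite mem_index_enum. Qed.

Lemma p0_pairs (T : finType) : (2 <= #|T|)%N -> p0 T \in pairs T.
Proof.
move=> h; rewrite /p0 -mem_enum mem_nth // -cardE /pairs card_draws bin_gt0 //.
Qed.

Lemma vmax_attain (R : realFieldType) (T : finType) (x : {set T} -> R) :
  (2 <= #|T|)%N -> exists2 p, p \in pairs T & vmax x = x p.
Proof.
move=> h; rewrite /vmax.
apply: (big_ind (fun v => exists2 p, p \in pairs T & v = x p)).
- by exists (p0 T) => //; apply: p0_pairs.
- move=> u v [p pp ->] [q qp ->]; case: (leP (x p) (x q)) => _.
  + by exists q.
  + by exists p.
- by move=> p pp; exists p.
Qed.

Lemma eqd (R : realFieldType) (T : finType) (t : {set T} -> R) a b c :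
  equidistant t -> a != b -> a != c -> b != c ->
  t (pr a b) <= Num.max (t (pr a c)) (t (pr b c)).
Proof.
move=> H ab ac bc; move: (H a b c ab ac bc) => /=.
rewrite leNgt; apply: contraL; rewrite gt_max => /andP[h1 h2].
have -> : Num.max (t (pr a b)) (Num.max (t (pr a c)) (t (pr b c))) = t (pr a b).
  by apply/max_idPl; rewrite ge_max !ltW.
by rewrite eqxx (lt_eqF h1) (lt_eqF h2).
Qed.
From mathcomp Require Import lra.
Set Implicit Arguments. Unset Strict Implicit.

Lemma F2 (R : realFieldType) (T : finType) (t : {set T} -> R) Omega p :
  eta t <= Omega -> p \in pairs T -> Mt t - t p <= 2 * Omega.
Proof.
move=> he pp; have := vmin_le t pp; move: he; rewrite /eta => he hv.
have : Mt t - vmin t <= 2 * Omega.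
  by move: he; rewrite ler_pdivrMr ?ltr0n // mulrC.
lra.
Qed.

Lemma F3 (R : realFieldType) (T : finType) (t : {set T} -> R) omega p :
  ge_opt omega (nu t) -> p \in pairs T -> t p < Mt t -> 2 * omega <= Mt t - t p.
Proof.
rewrite /nu; case: pickP => [q /andP[qp qlt] | hn]; last first.
  by move=> _ pp lt; move: (hn p); rewrite pp lt.
rewrite /= => h pp lt.
have := @ge_bigmin_seq' R _ (index_enum _) (fun p => (p \in pairs T) && (t p < Mt t))
   (fun p => Mt t - t p) (Mt t - t q) p (mem_index_enum _) (introT andP (conj pp lt)).
move: h; rewrite ler_pdivlMr ?ltr0n // => h1 h2.
have : 2 * omega <= Mt t - t p.
  by apply: le_trans h2; rewrite mulrC.
done.
Qed.

Lemma F4 (R : realFieldType) (T : finType) (t t' : {set T} -> R) p :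
  equidistant t -> coarse_type t = coarse_type t' -> p \in pairs T ->
  t' p < Mt t' -> t p < Mt t.
Proof.
move=> H ct pp; case: (pairsP pp) => a [b [ab ->]] lt'.
have : [set b0 | (b0 == a) || (t' (pr a b0) < Mt t')] \in coarse_type t.
  by rewrite ct; apply: imset_f.
case/imsetP => x _ hx.
have ha : a \in [set b0 | (b0 == a) || (t' (pr a b0) < Mt t')] by rewrite inE eqxx.
have hb : b \in [set b0 | (b0 == a) || (t' (pr a b0) < Mt t')] by rewrite inE lt' orbT.
rewrite hx inE in ha; rewrite hx inE in hb.
have [ax | xa] := eqVneq a x.
  subst x; case/orP: hb => // /eqP ba; by rewrite ba eqxx in ab.
have [bx | xb] := eqVneq b x.
  by subst x; rewrite pr_sym; move: ha; rewrite (negbTE ab).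
rewrite (negbTE xa) /= in ha; rewrite (negbTE xb) /= in hb.
have := eqd H ab xa xb; rewrite !(pr_sym _ x) => h.
apply: le_lt_trans h _; by rewrite gt_max ha hb.
Qed.
From mathcomp Require Import lra.
Set Implicit Arguments. Unset Strict Implicit.

Lemma sum_ind (T : finType) (P : pred {set T}) :
  (\sum_(p in pairs T) (P p : nat) = #|[set p in pairs T | P p]|)%N.
Proof.
rewrite -sum1_card big_mkcond /= [RHS]big_mkcond /=.
by apply: eq_bigr => p _; rewrite !inE; case: (#|p| == 2)%N; case: (P p).
Qed.

Lemma countK1 (R : realFieldType) (T : finType) (t : {set T} -> R) :
  (\sum_(p in pairs T) ((t p < Mt t)%R : nat) <= \sum_(B in coarse_type t) 'C(#|B|, 2))%N.
Proof.
apply: (@leq_trans (\sum_(p in pairs T) \sum_(B in coarse_type t) (p \subset B : nat))).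
  apply: leq_sum => p pp; case: ltP => // lt.
  case: (pairsP pp) => a [b [ab ep]].
  have Bin : [set b0 | (b0 == a) || (t (pr a b0) < Mt t)] \in coarse_type t.
    by apply: imset_f.
  rewrite (bigD1 _ Bin) /=.
  have -> : p \subset [set b0 | (b0 == a) || (t (pr a b0) < Mt t)].
    apply/subsetP => z; rewrite {1}ep => /set2P[]->; rewrite inE ?eqxx //.
    by rewrite -ep lt orbT.
  by [].
rewrite exchange_big /=; apply: leq_sum => B _.
rewrite sum_ind -cards_draws; apply: subset_leq_card; apply/subsetP => p.
by rewrite !inE => /andP[-> ->].
Qed.

From mathcomp Require Import zify.

Lemma countK2 (R : realFieldType) (T : finType) (t : {set T} -> R) :
  equidistant t -> (2 <= #|T|)%N ->
  (\sum_(p in pairs T) ((t p < Mt t)%R : nat) + #|T| <= npairs T + 1)%N.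
Proof.
move=> H hN.
have [q qp hq] := vmax_attain t hN.
case: (pairsP qp) => x [y [xy eq]].
have hM : t (pr x y) = Mt t by rewrite /Mt hq eq.
pose C := [set p in pairs T | ~~ (t p < Mt t)].
have hsplit : (\sum_(p in pairs T) ((t p < Mt t)%R : nat) + #|C| = npairs T)%N.
  rewrite -sum_ind -big_split /= /npairs -card_draws -sum1_card.
  by apply: eq_bigr => p _; case: (t p < Mt t).
pose f z := if t (pr x z) == Mt t then pr x z else pr y z.
have fC : forall z, z != x -> f z \in C.
  move=> z zx; rewrite /f; case: eqP => [h | h].
    by rewrite inE pr_pairs 1?eq_sym // h ltxx.
  have zy : z != y by apply/eqP => zy; subst z; apply: h; exact: hM.
  have xz : x != z by rewrite eq_sym.
  have yz : y != z by rewrite eq_sym.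
  have le1 : t (pr x z) <= Mt t by apply: vmax_ge; apply: pr_pairs.
  have lt1 : t (pr x z) < Mt t by rewrite lt_neqAle le1 andbT; apply/eqP.
  have := eqd H xy xz yz; rewrite hM le_max leNgt lt1 /= => h2.
  by rewrite inE pr_pairs // -leNgt h2.
have mem : forall z, z \in f z.
  by move=> z; rewrite /f; case: ifP => _; rewrite /pr set22.
have sub : forall z w, w \in f z -> [|| w == x, w == y | w == z].
  by move=> z w; rewrite /f; case: ifP => _ /set2P[]->; rewrite eqxx ?orbT.
have finj : {in [set~ x] &, injective f}.
  move=> z1 z2; rewrite !in_setC1 => nx1 nx2 e.
  have h1 : z2 \in f z1 by rewrite e mem.
  have h2 : z1 \in f z2 by rewrite -e mem.
  move: (sub _ _ h1) (sub _ _ h2); rewrite (negbTE nx2) (negbTE nx1) /=.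
  by move=> /orP[/eqP|/eqP] e1 /orP[/eqP|/eqP] e2; congruence.
have hc : (#|[set~ x]| <= #|C|)%N.
  rewrite -(card_in_imset finj); apply: subset_leq_card.
  by apply/subsetP => _ /imsetP[z hz ->]; apply: fC; rewrite in_setC1 in hz.
rewrite cardsC1 in hc.
lia.
Qed.

Theorem mainTheorem5 (R : realFieldType) (T : finType)
  (t t' : {set T} -> R) (Omega omega : R) :
  (2 <= #|T|)%N ->
  equidistant t -> equidistant t' ->
  coarse_type t = coarse_type t' ->
  0 < omega -> omega < Omega ->
  Num.max (eta t) (eta t') <= Omega ->
  ge_opt omega (nu t) -> ge_opt omega (nu t') ->
  dDelta t t' <= (npairs T + \sum_(B in coarse_type t) 'C(#|B|, 2))%:R
                   * (2 * (Omega - omega))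
  /\ (binary t -> binary t' ->
      dDelta t t' <= (2 * (npairs T)%:R - (#|T|)%:R + 1) * (2 * (Omega - omega))).
Proof.
move=> hN H H' ct hw hwO; rewrite ge_max => /andP[he he'] hnu hnu'.
set L := 2 * (Omega - omega).
have L0 : 0 <= L by rewrite /L; lra.
set c := Mt t - Mt t'.
set K := (\sum_(p in pairs T) ((t p < Mt t)%R : nat))%N.
have hup : forall q, q \in pairs T -> t q - t' q <= c + L.
  move=> q qp; have m1 := vmax_ge t qp; have m1' := vmax_ge t' qp.
  rewrite /c /L; rewrite /Mt in m1 m1' *.
  case: (ltP (t' q) (Mt t')) => h'.
    have h := F4 H ct qp h'.
    have := F2 he' qp; have := F3 hnu qp h; rewrite /Mt; lra.
  rewrite /Mt in h'; lra.
have hD : vmax (fun p => t p - t' p) <= c + L.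
  by have [q qp ->] := vmax_attain (fun p => t p - t' p) hN; apply: hup.
have hlow : forall p, p \in pairs T ->
    c - (t p - t' p) <= ((t p < Mt t)%R : nat)%:R * L.
  move=> p pp; have m1 := vmax_ge t pp; have m1' := vmax_ge t' pp.
  rewrite /c; rewrite /Mt in m1 m1' *.
  case: (ltP (t p) (Mt t)) => h /=.
    have h' := F4 H' (esym ct) pp h.
    have := F2 he pp; have := F3 hnu' pp h'; rewrite /Mt /L mul1r; lra.
  rewrite mul0r; rewrite /Mt in h; lra.
have main : dDelta t t' <= (npairs T + K)%:R * L.
  rewrite /dDelta.
  have -> : (npairs T)%:R * vmax (fun p => t p - t' p)
            = \sum_(p in pairs T) vmax (fun p => t p - t' p).
    by rewrite sumr_const /pairs card_draws mulr_natl.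
  rewrite -big_split /=.
  apply: (@le_trans _ _ (\sum_(p in pairs T) (L + ((t p < Mt t)%R : nat)%:R * L))).
    apply: ler_sum => p pp; have := hlow p pp; lra.
  rewrite big_split /= sumr_const -big_distrl /= -natr_sum.
  have hcard : #|pairs T| = npairs T by rewrite /pairs card_draws.
  by rewrite hcard -/K natrD mulrDl [(npairs T)%:R * L]mulr_natl.
split.
  apply: le_trans main _; apply: ler_wpM2r => //; rewrite ler_nat leq_add2l.
  exact: countK1.
move=> _ _; apply: le_trans main _; apply: ler_wpM2r => //.
have hk := countK2 H hN; rewrite -/K in hk.
have : ((K + #|T|)%N%:R <= (npairs T + 1)%N%:R :> R) by rewrite ler_nat.
rewrite !natrD; lra.
Qed.
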